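(* Let $L=\mathbb{Z}\times\mathbb{Z}$ with the product $$(p,q)\cdot(p',q')=\Bigl(p+p',\ q+q'+\binom{p}{2}p'\Bigr).$$ Then $L$ is a loop which is torsion-free nilpotent of class $3$, with $$D_2L=D_3L=\{(0,q)\mid q\in\mathbb{Z}\},$$ while $\mathrm{LMlt}(L)$ is nilpotent of class $2$.
   Context: Here $\binom{p}{2}=p(p-1)/2$ for $p\in\mathbb{Z}$. A loop is a set with a product and two-sided identity in which all left multiplications $x\mapsto ax$ and right multiplications $x\mapsto xa$ are bijective. $\mathrm{LMlt}(L)$ is the group of permutations of $L$ generated by the left multiplications $L_a\colon x\mapsto ax$. The loop algebra $\mathbb{Q}L$ has basis $L$ with bilinearly extended product; $I$ is the kernel of the linear map $\mathbb{Q}L\to\mathbb{Q}$ sending each element of $L$ to $1$; $I^k$ is the ideal spanned by all products (any bracketing) of at least $k$ elements of $I$; $D_kL=\{g\in L\mid g-1\in I^k\}$. $L$ is torsion-free nilpotent of class $n$ if $D_{n+1}L$ is trivial and $D_nL$ is not. A group $G$ is nilpotent of class $c$ if $\gamma_{c+1}G=1\neq\gamma_cG$, where $\gamma_1G=G$, $\gamma_{k+1}G=[G,\gamma_kG]$. *)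

(* Defs.v *)
From mathcomp Require Import all_boot all_order all_algebra.
Set Implicit Arguments. Unset Strict Implicit. Unset Printing Implicit Defensive.
Import Order.TTheory GRing.Theory Num.Theory.
Local Open Scope ring_scope.

Section Loops.
Variable T : eqType.
Variable mul : T -> T -> T.
Variable e : T.

Definition is_loop : Prop :=
  (forall x, mul e x = x /\ mul x e = x) /\
  (forall a, bijective (mul a)) /\
  (forall a, bijective (fun x => mul x a)).

(* ---- The loop algebra QL ----
   An element of QL is represented by a finite formal linear combination
   (a list of pairs (coefficient, basis element)); two representations
   denote the same element iff their coefficient functions agree. *)
Definition QL := seq (rat * T).

Definition coefQL (u : QL) (x : T) : rat :=
  \sum_(a <- u) (if a.2 == x then a.1 else 0).

Definition eqQL (u v : QL) : Prop := forall x, coefQL u x = coefQL v x.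

Definition basisQL (x : T) : QL := [:: (1, x)].
Definition addQL (u v : QL) : QL := u ++ v.
Definition scaleQL (c : rat) (u : QL) : QL := [seq (c * a.1, a.2) | a <- u].
Definition subQL (u v : QL) : QL := addQL u (scaleQL (-1) v).
Definition mulQL (u v : QL) : QL :=
  [seq (a.1 * b.1, mul a.2 b.2) | a <- u, b <- v].

Definition augmentation (u : QL) : rat := \sum_(a <- u) a.1.
Definition inI (u : QL) : Prop := augmentation u = 0.

Inductive Iprod : nat -> QL -> Prop :=
  | Iprod_leaf u : inI u -> Iprod 1 u
  | Iprod_node m n u v : Iprod m u -> Iprod n v -> Iprod (m + n) (mulQL u v).

Definition in_span (P : QL -> Prop) (v : QL) : Prop :=
  exists ws : seq (rat * QL),
    (forall w, w \in ws -> P w.2) /\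
    eqQL v (flatten [seq scaleQL w.1 w.2 | w <- ws]).

Definition inIpow (k : nat) (v : QL) : Prop :=
  in_span (fun u => exists2 m, (k <= m)%N & Iprod m u) v.

Definition Dk (k : nat) (g : T) : Prop := inIpow k (subQL (basisQL g) (basisQL e)).

Definition tf_nilpotent_class (n : nat) : Prop :=
  (forall g, Dk n.+1 g <-> g = e) /\ ~ (forall g, Dk n g -> g = e).

End Loops.

Section PermGroups.
Variable T : Type.

Inductive gen (S : (T -> T) -> Prop) : (T -> T) -> Prop :=
  | gen_id : gen S id
  | gen_mul s g : S s -> gen S g -> gen S (s \o g)
  | gen_inv s s' g : S s -> cancel s s' -> cancel s' s -> gen S g -> gen S (s' \o g)
  | gen_ext f g : gen S f -> f =1 g -> gen S g.

Definition comm_set (G H : (T -> T) -> Prop) : (T -> T) -> Prop :=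
  fun c => exists g g' h h', [/\ G g, H h, cancel g g' /\ cancel g' g,
    cancel h h' /\ cancel h' h & c =1 g' \o h' \o g \o h].

Fixpoint gamma (G : (T -> T) -> Prop) (k : nat) : (T -> T) -> Prop :=
  match k with
  | 0 | 1 => G
  | k'.+1 => gen (comm_set G (gamma G k'))
  end.

Definition group_nilpotent_class (G : (T -> T) -> Prop) (c : nat) : Prop :=
  (forall f, gamma G c.+1 f -> f =1 id) /\ ~ (forall f, gamma G c f -> f =1 id).

Definition LMlt (mul : T -> T -> T) : (T -> T) -> Prop :=
  gen (fun f => exists a, f = mul a).

End PermGroups.

Definition binom2 (p : int) : int := ((p * (p - 1)) %/ 2)%Z.

Definition mulZ2 (x y : int * int) : int * int :=
  (x.1 + y.1, x.2 + y.2 + binom2 x.1 * y.1).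

Definition eZ2 : int * int := (0, 0).

(* Main.v *)
Require Import Defs.
From mathcomp Require Import all_boot all_order all_algebra.
From mathcomp Require Import ring lra zify.
Set Implicit Arguments. Unset Strict Implicit. Unset Printing Implicit Defensive.
Import Order.TTheory GRing.Theory Num.Theory.
Local Open Scope ring_scope.

Section Gen.
Variable T : eqType.
Implicit Types (u v : QL T) (x y : T).

Lemma coefQL_nil x : coefQL ([::] : QL T) x = 0.
Proof. by rewrite /coefQL big_nil. Qed.

Lemma coefQL_cons a u x :
  coefQL (a :: u) x = (a.2 == x)%:R * a.1 + coefQL u x.
Proof. by rewrite /coefQL big_cons; case: (a.2 == x); rewrite ?mul1r ?mul0r. Qed.

Lemma coefQL_cat u v x : coefQL (u ++ v) x = coefQL u x + coefQL v x.
Proof. by rewrite /coefQL big_cat. Qed.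

Lemma coefQL_scale c u x : coefQL (scaleQL c u) x = c * coefQL u x.
Proof.
elim: u => [|a u IH]; first by rewrite /scaleQL /= !coefQL_nil mulr0.
by rewrite /scaleQL map_cons !coefQL_cons -/(scaleQL c u) IH /=; ring.
Qed.

Lemma coefQL_notin u x : x \notin map snd u -> coefQL u x = 0.
Proof.
elim: u => [|a u IH]; first by rewrite coefQL_nil.
rewrite map_cons inE negb_or => /andP[ne nin].
by rewrite coefQL_cons IH // eq_sym (negbTE ne) mul0r addr0.
Qed.

Lemma eqQL_refl u : eqQL u u. Proof. by []. Qed.
Lemma eqQL_sym u v : eqQL u v -> eqQL v u. Proof. by move=> h x; rewrite h. Qed.
Lemma eqQL_trans u v w : eqQL u v -> eqQL v w -> eqQL u w.
Proof. by move=> h1 h2 x; rewrite h1 h2. Qed.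

Definition coefc (u : QL T) (x : T) : rat :=
  foldr (fun a acc => (if a.2 == x then a.1 else 0) + acc) 0 u.

Lemma coefcE u x : coefc u x = coefQL u x.
Proof.
elim: u => [|a u IH]; first by rewrite coefQL_nil.
by rewrite coefQL_cons /= IH; case: (a.2 == x); rewrite ?mul1r ?mul0r.
Qed.

Lemma eqQL_check u v :
  all (fun x => coefc u x == coefc v x) (map snd (u ++ v)) -> eqQL u v.
Proof.
move=> /allP H x; case: (boolP (x \in map snd (u ++ v))) => hx.
  by have := H x hx; rewrite !coefcE => /eqP.
move: hx; rewrite map_cat mem_cat negb_or => /andP[hu hv].
by rewrite !coefQL_notin.
Qed.

Definition lin (f : T -> rat) (u : QL T) : rat := \sum_(a <- u) a.1 * f a.2.

Lemma lin_cat f u v : lin f (u ++ v) = lin f u + lin f v.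
Proof. by rewrite /lin big_cat. Qed.

Lemma lin_scale f c u : lin f (scaleQL c u) = c * lin f u.
Proof. by rewrite /lin big_map mulr_sumr; apply: eq_bigr => a _ /=; rewrite mulrA. Qed.

Lemma lin_coef f u (s : seq T) : uniq s -> {subset map snd u <= s} ->
  lin f u = \sum_(x <- s) coefQL u x * f x.
Proof.
move=> us; elim: u => [|a u IH] sub.
  by rewrite /lin big_nil big1 // => x _; rewrite coefQL_nil mul0r.
have ha : a.2 \in s by apply: sub; rewrite inE eqxx.
rewrite /lin big_cons -/(lin f u) IH; last by move=> y hy; apply: sub; rewrite inE hy orbT.
under [X in _ = X]eq_bigr do rewrite coefQL_cons mulrDl.
rewrite big_split /=; congr (_ + _).
rewrite (bigD1_seq a.2) //= eqxx mul1r big1 ?addr0 // => x /negbTE.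
by rewrite eq_sym => ->; rewrite !mul0r.
Qed.

Lemma lin_eq f u v : eqQL u v -> lin f u = lin f v.
Proof.
move=> h; set s := undup (map snd (u ++ v)).
have us : uniq s by apply: undup_uniq.
rewrite (lin_coef f us) ?(lin_coef f (u:=v) us).
  by apply: eq_bigr => x _; rewrite h.
all: by move=> y hy; rewrite mem_undup map_cat mem_cat hy ?orbT.
Qed.

Lemma lin_flatten f (ws : seq (rat * QL T)) :
  lin f (flatten [seq scaleQL w.1 w.2 | w <- ws]) = \sum_(w <- ws) w.1 * lin f w.2.
Proof.
elim: ws => [|w ws IH]; first by rewrite /lin !big_nil.
by rewrite map_cons /= lin_cat IH lin_scale big_cons.
Qed.

Lemma lin_mul (mul : T -> T -> T) f g1 k1 g2 k2 g3 k3 u v :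
  (forall x y, f (mul x y) = g1 x * k1 y + g2 x * k2 y + g3 x * k3 y) ->
  lin f (mulQL mul u v) =
    lin g1 u * lin k1 v + lin g2 u * lin k2 v + lin g3 u * lin k3 v.
Proof.
move=> hf; rewrite /lin /mulQL big_allpairs_dep /=.
rewrite !mulr_suml -!big_split /=; apply: eq_bigr => a _.
rewrite !mulr_sumr -!big_split /=; apply: eq_bigr => b _.
rewrite hf; ring.
Qed.

End Gen.
Lemma binom2_2 (p : int) : binom2 p * 2 = p * (p - 1).
Proof.
rewrite /binom2; apply: divzK; apply/dvdzP.
have e := divz_eq p 2.
have r0 : 0 <= (p %% 2)%Z by apply: modz_ge0.
have r1 : (p %% 2)%Z < 2 by apply: ltz_pmod.
move: e; have [->|->] : (p %% 2)%Z = 0 \/ (p %% 2)%Z = 1 by lia.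
  by move=> e; exists ((p %/ 2)%Z * ((p %/ 2)%Z * 2 - 1)); rewrite {1 2}e; ring.
by move=> e; exists ((p %/ 2)%Z * ((p %/ 2)%Z * 2 + 1)); rewrite {1 2}e; ring.
Qed.

Lemma binom2D (p p' : int) : binom2 (p + p') = binom2 p + binom2 p' + p * p'.
Proof.
apply/eqP; rewrite -subr_eq0; apply/eqP.
have h : (binom2 (p + p') - (binom2 p + binom2 p' + p * p')) * 2 = 0.
  rewrite mulrBl !mulrDl !binom2_2; ring.
by move/eqP: h; rewrite mulf_eq0 orbF => /eqP.
Qed.

Lemma binom2_0 : binom2 0 = 0.
Proof. by []. Qed.

Notation T2 := (int * int)%type.

Definition epsf (x : T2) : rat := 1.
Definition hf (x : T2) : rat := (x.1)%:~R.
Definition gf (x : T2) : rat := (binom2 x.1)%:~R.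
Definition Ff (x : T2) : rat := (x.2)%:~R.
Definition zf (x : T2) : rat := 0.

Lemma lin_zf u : lin zf u = 0.
Proof. by rewrite /lin big1 // => a _; rewrite /zf mulr0. Qed.
Lemma lin_epsf u : lin epsf u = augmentation u.
Proof. by rewrite /lin /augmentation; apply: eq_bigr => a _; rewrite /epsf mulr1. Qed.

Lemma eps_mul u v : lin epsf (mulQL mulZ2 u v) = lin epsf u * lin epsf v.
Proof.
rewrite (@lin_mul _ mulZ2 epsf epsf epsf zf zf zf zf) ?lin_zf; first by ring.
by move=> x y; rewrite /epsf /zf; ring.
Qed.

Lemma h_mul u v : lin hf (mulQL mulZ2 u v) = lin hf u * lin epsf v + lin epsf u * lin hf v.
Proof.
rewrite (@lin_mul _ mulZ2 hf hf epsf epsf hf zf zf) ?lin_zf; first by ring.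
by move=> x y; rewrite /hf /epsf /zf /mulZ2 /= intrD; ring.
Qed.

Lemma g_mul u v : lin gf (mulQL mulZ2 u v) =
  lin gf u * lin epsf v + lin epsf u * lin gf v + lin hf u * lin hf v.
Proof.
apply: lin_mul => x y.
by rewrite /hf /gf /epsf /mulZ2 /= binom2D !intrD intrM; ring.
Qed.

Lemma F_mul u v : lin Ff (mulQL mulZ2 u v) =
  lin Ff u * lin epsf v + lin epsf u * lin Ff v + lin gf u * lin hf v.
Proof.
apply: lin_mul => x y.
by rewrite /hf /gf /Ff /epsf /mulZ2 /= !intrD intrM; ring.
Qed.

Lemma Iprod_inv m u : Iprod mulZ2 m u ->
  [/\ (0 < m)%N, lin epsf u = 0, ((1 < m)%N -> lin hf u = 0),
      ((2 < m)%N -> lin gf u = 0) & ((3 < m)%N -> lin Ff u = 0)].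
Proof.
elim=> {m u} [u hu|m n u v _ [m0 eu hu gu Fu] _ [n0 ev hv gv Fv]].
  by split=> //; rewrite lin_epsf.
split.
- by rewrite addn_gt0 m0.
- by rewrite eps_mul eu mul0r.
- by move=> _; rewrite h_mul eu ev !mul0r mulr0 addr0.
- move=> hmn; rewrite g_mul eu ev !mul0r !mulr0 !add0r.
  have [m1|m1] := ltnP 1 m; first by rewrite hu ?mul0r.
  by rewrite hv ?mulr0 //; lia.
- move=> hmn; rewrite F_mul eu ev !mul0r !mulr0 !add0r.
  have [m1|m1] := ltnP 2 m; first by rewrite gu ?mul0r.
  by rewrite hv ?mulr0 //; lia.
Qed.

Lemma Dk_lin f k g : (forall m u, (k <= m)%N -> Iprod mulZ2 m u -> lin f u = 0) ->
  Dk mulZ2 eZ2 k g -> f g = f eZ2.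
Proof.
move=> hf [ws [hws heq]].
have := lin_eq f heq; rewrite lin_flatten big_seq big1; last first.
  by move=> w /hws [m km hm]; rewrite (hf m) ?mulr0.
rewrite /subQL /addQL lin_cat lin_scale /lin !big_cons !big_nil /=.
by move/eqP; rewrite !mul1r !addr0 mulN1r subr_eq0 => /eqP.
Qed.

Lemma Dk2_fst g : Dk mulZ2 eZ2 2 g -> g.1 = 0.
Proof.
move=> /(Dk_lin (f:=hf)) h; have: hf g = hf eZ2.
  apply: h => m u km /Iprod_inv [_ _ hh _ _]; exact: hh.
by rewrite /hf /= => /eqP; rewrite intr_eq0 => /eqP.
Qed.

Lemma Dk4_triv g : Dk mulZ2 eZ2 4 g -> g = eZ2.
Proof.
move=> D.
have h1 : g.1 = 0.
  apply: Dk2_fst; case: D => ws [hws heq]; exists ws; split=> // w /hws [m km hm].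
  by exists m => //; lia.
have : Ff g = Ff eZ2.
  apply: (Dk_lin _ D) => m u km /Iprod_inv [_ _ _ _ hF]; exact: hF.
rewrite /Ff /= => /eqP; rewrite intr_eq0 => /eqP h2.
by case: g h1 h2 D => a b /= -> ->.
Qed.

Section Span.
Variable k : nat.

Lemma coefQL_flatten (ws : seq (rat * QL T2)) x :
  coefQL (flatten [seq scaleQL w.1 w.2 | w <- ws]) x = \sum_(w <- ws) w.1 * coefQL w.2 x.
Proof.
elim: ws => [|w ws IH]; first by rewrite big_nil coefQL_nil.
by rewrite map_cons /= coefQL_cat coefQL_scale IH big_cons.
Qed.

Lemma span_eq v v' : inIpow mulZ2 k v -> eqQL v v' -> inIpow mulZ2 k v'.
Proof.
move=> [ws [h1 h2]] e; exists ws; split=> //.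
exact: eqQL_trans (eqQL_sym e) h2.
Qed.

Lemma span_add u v : inIpow mulZ2 k u -> inIpow mulZ2 k v -> inIpow mulZ2 k (addQL u v).
Proof.
move=> [ws [h1 h2]] [ws' [h1' h2']]; exists (ws ++ ws'); split.
  by move=> w; rewrite mem_cat => /orP[/h1|/h1'].
by move=> x; rewrite map_cat flatten_cat /addQL !coefQL_cat h2 h2'.
Qed.

Lemma span_scale c v : inIpow mulZ2 k v -> inIpow mulZ2 k (scaleQL c v).
Proof.
move=> [ws [h1 h2]]; exists [seq (c * w.1, w.2) | w <- ws]; split.
  by move=> w /mapP [w' /h1 hw' ->].
move=> x; rewrite coefQL_scale h2 !coefQL_flatten big_map mulr_sumr.
by apply: eq_bigr => w _ /=; rewrite mulrA.
Qed.

Lemma span_prod m u : (k <= m)%N -> Iprod mulZ2 m u -> inIpow mulZ2 k u.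
Proof.
move=> km hu; exists [:: (1, u)]; split.
  by move=> w; rewrite inE => /eqP -> /=; exists m.
by move=> x; rewrite /= cats0 coefQL_scale mul1r.
Qed.

End Span.

Lemma mulZ2_0 q x : mulZ2 (0, q) x = (x.1, q + x.2).
Proof. by rewrite /mulZ2 /= binom2_0 mul0r addr0 add0r. Qed.

Definition tau (q : int) (v : QL T2) : QL T2 := [seq (a.1, mulZ2 (0, q) a.2) | a <- v].

Lemma coefQL_tau q v x : coefQL (tau q v) x = coefQL v (x.1, x.2 - q).
Proof.
elim: v => [|a v IH]; first by rewrite /tau /= !coefQL_nil.
rewrite /tau map_cons !coefQL_cons -/(tau q v) IH /= mulZ2_0; congr (_ * _ + _).
clear IH; case: a => c [a1 a2]; case: x => x1 x2 /=; rewrite !xpair_eqE.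
congr (_ && _)%:R; apply/eqP/eqP; lia.
Qed.

Lemma tau_eq q u v : eqQL u v -> eqQL (tau q u) (tau q v).
Proof. by move=> h x; rewrite !coefQL_tau h. Qed.

Lemma tau_flatten q (ws : seq (rat * QL T2)) :
  tau q (flatten [seq scaleQL w.1 w.2 | w <- ws]) =
  flatten [seq scaleQL w.1 w.2 | w <- [seq (w.1, tau q w.2) | w <- ws]].
Proof.
rewrite /tau map_flatten -!map_comp; congr flatten; apply: eq_map => w /=.
by rewrite /scaleQL -!map_comp.
Qed.

Lemma tau_mul q u v : tau q (mulQL mulZ2 u v) = mulQL mulZ2 (tau q u) v.
Proof.
rewrite /tau /mulQL map_allpairs allpairs_mapl; apply: eq_allpairs => a b /=.
rewrite !mulZ2_0 /mulZ2 /=; congr (_, (_, _)); ring.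
Qed.

Lemma Iprod_tau q m u : Iprod mulZ2 m u -> Iprod mulZ2 m (tau q u).
Proof.
elim=> {m u} [u hu|m n u v _ IHu hv _].
  by apply: Iprod_leaf; move: hu; rewrite /inI /augmentation /tau big_map; exact: id.
by rewrite tau_mul; apply: Iprod_node IHu hv.
Qed.

Lemma span_tau k q v : inIpow mulZ2 k v -> inIpow mulZ2 k (tau q v).
Proof.
move=> [ws [h1 h2]]; exists [seq (w.1, tau q w.2) | w <- ws]; split.
  move=> w /mapP [w' /h1 [m km hm] ->] /=; exists m => //; exact: Iprod_tau.
by rewrite -tau_flatten; apply: tau_eq.
Qed.

Definition Dq (q : int) : QL T2 := subQL (basisQL (0, q)) (basisQL eZ2).

Lemma D_step q : eqQL (Dq (q + 1)) (addQL (Dq q) (tau q (Dq 1))).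
Proof.
move=> x; rewrite /Dq /addQL /subQL /tau /basisQL /= /addQL /=.
rewrite !coefQL_cons !coefQL_nil /= !mulZ2_0 /= !addr0; ring.
Qed.

Lemma D_stepN q : eqQL (Dq (q - 1)) (addQL (Dq q) (scaleQL (-1) (tau (q - 1) (Dq 1)))).
Proof.
move=> x; rewrite /Dq /addQL /subQL /tau /basisQL /= /addQL /=.
rewrite !coefQL_cons !coefQL_nil /= !mulZ2_0 /= !addr0 subrK; ring.
Qed.

Definition Xe (x : T2) : QL T2 := subQL (basisQL x) (basisQL eZ2).
Definition PL x y z := mulQL mulZ2 (mulQL mulZ2 (Xe x) (Xe y)) (Xe z).
Definition PR x y z := mulQL mulZ2 (Xe x) (mulQL mulZ2 (Xe y) (Xe z)).

Lemma Xe_I x : Iprod mulZ2 1 (Xe x).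
Proof.
apply: Iprod_leaf; rewrite /inI /augmentation /Xe /subQL /addQL /basisQL /=.
by rewrite !big_cons big_nil /=; ring.
Qed.

Lemma PL_I x y z : Iprod mulZ2 3 (PL x y z).
Proof. exact: (Iprod_node (Iprod_node (Xe_I x) (Xe_I y)) (Xe_I z)). Qed.
Lemma PR_I x y z : Iprod mulZ2 3 (PR x y z).
Proof. exact: (Iprod_node (Xe_I x) (Iprod_node (Xe_I y) (Xe_I z))). Qed.

Definition Wit : seq (rat * QL T2) :=
  [:: (3/2, PR (1,1) (1,0) (-2,0)); (-1/2, PL (1,1) (1,0) (-2,-1));
      (-1/2, PL (0,1) (-1,0) (-1,0)); (-1/2, PL (0,-1) (-1,1) (0,-1));
      (1, PR (2,1) (-1,0) (-1,1))].

Lemma D1_in : inIpow mulZ2 3 (Dq 1).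
Proof.
exists Wit; split.
  move=> w; rewrite !inE.
  move=> /orP[/eqP->|/orP[/eqP->|/orP[/eqP->|/orP[/eqP->|/eqP->]]]] /=;
    exists 3%N => //; (apply: PL_I || apply: PR_I).
apply: eqQL_check; vm_compute; reflexivity.
Qed.

Lemma D_in q : inIpow mulZ2 3 (Dq q).
Proof.
have Pn : forall n : nat, inIpow mulZ2 3 (Dq n%:Z).
  elim=> [|n IH].
    exists [::]; split => // x; rewrite /Dq /subQL /addQL /basisQL /=.
    by rewrite !coefQL_cons coefQL_nil /=; ring.
  have -> : (n.+1)%:Z = n%:Z + 1 by lia.
  apply: span_eq (eqQL_sym (D_step _)).
  by apply: span_add IH (span_tau _ D1_in).
have Nn : forall n : nat, inIpow mulZ2 3 (Dq (- n%:Z)).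
  elim=> [|n IH]; first by rewrite oppr0; apply: Pn 0%N.
  have -> : - (n.+1)%:Z = - n%:Z - 1 by lia.
  apply: span_eq (eqQL_sym (D_stepN _)); apply: span_add IH _.
  by apply: span_scale; apply: span_tau D1_in.
by case: q => n; [apply: Pn | rewrite NegzE; apply: Nn].
Qed.

Lemma Dk3_iff g : Dk mulZ2 eZ2 3 g <-> g.1 = 0.
Proof.
split.
  move=> D; apply: Dk2_fst; case: D => ws [hws heq]; exists ws; split=> // w /hws [m km hm].
  by exists m => //; lia.
by case: g => a b /= ->; apply: D_in.
Qed.

Lemma Dk2_iff g : Dk mulZ2 eZ2 2 g <-> g.1 = 0.
Proof.
split; first exact: Dk2_fst.
move=> /Dk3_iff [ws [hws heq]]; exists ws; split=> // w /hws [m km hm].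
by exists m => //; lia.
Qed.

Lemma Dk4_iff g : Dk mulZ2 eZ2 4 g <-> g = eZ2.
Proof.
split; first exact: Dk4_triv.
move=> ->; exists [::]; split => // x; rewrite /subQL /addQL /basisQL /=.
by rewrite !coefQL_cons coefQL_nil /=; ring.
Qed.

Lemma loopZ2 : is_loop mulZ2 eZ2.
Proof.
split; [|split].
- move=> [p q]; rewrite /eZ2 mulZ2_0 /mulZ2 /= add0r; split=> //.
  by rewrite mulr0 !addr0.
- move=> [a1 a2]; exists (fun y : T2 => (y.1 - a1, y.2 - a2 - binom2 a1 * (y.1 - a1))).
    by move=> [p q]; rewrite /mulZ2 /=; congr (_, _); ring.
  by move=> [p q]; rewrite /mulZ2 /=; congr (_, _); ring.
- move=> [a1 a2]; exists (fun y : T2 => (y.1 - a1, y.2 - a2 - binom2 (y.1 - a1) * a1)).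
    by move=> [p q]; rewrite /mulZ2 /= addrK; congr (_, _); ring.
  by move=> [p q]; rewrite /mulZ2 /=; congr (_, _); ring.
Qed.

Definition affm (a b c : int) (x : T2) : T2 := (x.1 + a, x.2 + c * x.1 + b).
Definition Aff (f : T2 -> T2) := exists a b c, f =1 affm a b c.
Definition Tr (f : T2 -> T2) := exists d : int, f =1 fun x => (x.1, x.2 + d).

Lemma aff_inv a b c f f' : f =1 affm a b c -> cancel f f' ->
  f' =1 fun y => (y.1 - a, y.2 - b - c * (y.1 - a)).
Proof.
move=> hf hc y.
have -> : y = f (y.1 - a, y.2 - b - c * (y.1 - a)).
  by rewrite hf /affm /=; case: y => p q /=; congr (_, _); ring.
rewrite hc; case: y => p q /=; congr (_, _); rewrite hf /affm /=; ring.
Qed.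

Lemma aff_comp f g : Aff f -> Aff g -> Aff (f \o g).
Proof.
move=> [a [b [c hf]]] [a' [b' [c' hg]]].
exists (a + a'), (b + b' + c * a'), (c + c') => x /=.
by rewrite hg hf /affm /=; congr (_, _); ring.
Qed.

Lemma aff_mul a : Aff (mulZ2 a).
Proof.
by exists a.1, a.2, (binom2 a.1) => x; rewrite /mulZ2 /affm; congr (_, _); ring.
Qed.

Lemma aff_invA f f' : Aff f -> cancel f f' -> Aff f'.
Proof.
move=> [a [b [c hf]]] hc; exists (- a), (- b + c * a), (- c) => y.
by rewrite (aff_inv hf hc) /affm; congr (_, _); ring.
Qed.

Lemma LMlt_aff f : LMlt mulZ2 f -> Aff f.
Proof.
elim=> {f} [|s g [a ->] _ IH|s s' g [a ->] c1 c2 _ IH|f g _ IH e].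
- by exists 0, 0, 0 => x; rewrite /affm /=; case: x => p q /=; congr (_, _); ring.
- exact: aff_comp (aff_mul a) IH.
- exact: aff_comp (aff_invA (aff_mul a) c1) IH.
- by case: IH => a [b [c h]]; exists a, b, c => x; rewrite -e h.
Qed.

Lemma comm_formula g g' h h' a1 b1 c1 a2 b2 c2 :
  g =1 affm a1 b1 c1 -> h =1 affm a2 b2 c2 -> cancel g g' -> cancel h h' ->
  (g' \o h' \o g \o h) =1 fun x => (x.1, x.2 + (c1 * a2 - c2 * a1)).
Proof.
move=> hg hh cg ch x /=.
rewrite (aff_inv hg cg) (aff_inv hh ch) hg hh /affm /=; congr (_, _); ring.
Qed.

Lemma tr_aff f : Tr f -> Aff f.
Proof. by move=> [d hd]; exists 0, d, 0 => x; rewrite hd /affm; congr (_, _); ring. Qed.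

Lemma gamma2_tr f : gamma (LMlt mulZ2) 2 f -> Tr f.
Proof.
have hS : forall s, comm_set (LMlt mulZ2) (LMlt mulZ2) s -> Tr s.
  move=> s [g [g' [h [h' [Gg Gh [cg _] [ch _] e]]]]].
  case: (LMlt_aff Gg) => a1 [b1 [c1 hg]]; case: (LMlt_aff Gh) => a2 [b2 [c2 hh]].
  by exists (c1 * a2 - c2 * a1) => x; rewrite e (comm_formula hg hh cg ch).
elim=> {f} [|s g /hS [d hd] _ [d' hd']|s s' g /hS [d hd] c1 c2 _ [d' hd']|f g _ [d hd] e].
- by exists 0 => x; rewrite addr0; case: x.
- by exists (d + d') => x /=; rewrite hd hd' /=; congr (_, _); ring.
- exists (d' - d) => x /=.
  have := aff_inv (a:=0) (b:=d) (c:=0) (f:=s) _ c1 (g x).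
  rewrite hd' => ->; first by rewrite /=; congr (_, _); ring.
  by move=> y; rewrite hd /affm; congr (_, _); ring.
- by exists d => x; rewrite -e hd.
Qed.

Lemma gamma3_id f : gamma (LMlt mulZ2) 3 f -> f =1 id.
Proof.
have hS : forall s, comm_set (LMlt mulZ2) (gamma (LMlt mulZ2) 2) s -> s =1 id.
  move=> s [g [g' [h [h' [Gg Gh [cg _] [ch _] e]]]]].
  case: (LMlt_aff Gg) => a1 [b1 [c1 hg]]; case: (gamma2_tr Gh) => d hd.
  have hh : h =1 affm 0 d 0 by move=> x; rewrite hd /affm; congr (_, _); ring.
  move=> x; rewrite e (comm_formula hg hh cg ch) /=; case: x => p q /=.
  by congr (_, _); ring.
elim=> {f} [|s g /hS hs _ IH|s s' g /hS hs c1 c2 _ IH|f g _ IH e].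
- by [].
- by move=> x /=; rewrite hs IH.
- move=> x /=; rewrite IH; have := c1 x; by rewrite hs.
- by move=> x; rewrite -e IH.
Qed.

Lemma gamma2_nontriv : ~ (forall f, gamma (LMlt mulZ2) 2 f -> f =1 id).
Proof.
set g := mulZ2 (2, 0); set h := mulZ2 (1, 0).
set g' := fun y : T2 => (y.1 - 2, y.2 - 0 - 1 * (y.1 - 2)).
set h' := fun y : T2 => (y.1 - 1, y.2 - 0 - 0 * (y.1 - 1)).
have hg : g =1 affm 2 0 1 by move=> x; rewrite /g /mulZ2 /affm /= (_ : binom2 2 = 1) //; congr (_, _); ring.
have hh : h =1 affm 1 0 0 by move=> x; rewrite /h /mulZ2 /affm /= (_ : binom2 1 = 0) //; congr (_, _); ring.
have cg : cancel g g' by move=> x; rewrite hg /g' /affm /=; case: x => p q /=; congr (_, _); ring.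
have ch : cancel h h' by move=> x; rewrite hh /h' /affm /=; case: x => p q /=; congr (_, _); ring.
have cg' : cancel g' g by move=> x; rewrite hg /g' /affm /=; case: x => p q /=; congr (_, _); ring.
have ch' : cancel h' h by move=> x; rewrite hh /h' /affm /=; case: x => p q /=; congr (_, _); ring.
have Gg : LMlt mulZ2 g.
  by apply: (gen_ext (gen_mul (s := g) (ex_intro _ (2, 0) erefl) (gen_id _))).
have Gh : LMlt mulZ2 h.
  by apply: (gen_ext (gen_mul (s := h) (ex_intro _ (1, 0) erefl) (gen_id _))).
move=> /(_ (g' \o h' \o g \o h)) H.
have : gamma (LMlt mulZ2) 2 (g' \o h' \o g \o h).
  apply: (gen_ext (gen_mul (s := g' \o h' \o g \o h) _ (gen_id _))) => //.
  by exists g, g', h, h'; split.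
move=> /H /(_ (0, 0)); rewrite (comm_formula hg hh cg ch) /=.
by move=> [].
Qed.

Theorem proposition3p4 :
  is_loop mulZ2 eZ2 /\
  tf_nilpotent_class mulZ2 eZ2 3 /\
  (forall g : int * int, Dk mulZ2 eZ2 2 g <-> g.1 = 0) /\
  (forall g : int * int, Dk mulZ2 eZ2 3 g <-> g.1 = 0) /\
  group_nilpotent_class (LMlt mulZ2) 2.
Proof.
split; first exact: loopZ2.
split.
  split; first exact: Dk4_iff.
  move=> /(_ (0, 1)) H; have : (0, 1) = eZ2 :> T2 by apply: H; apply/Dk3_iff.
  by [].
split; first exact: Dk2_iff.
split; first exact: Dk3_iff.
split; first exact: gamma3_id.
exact: gamma2_nontriv.
Qed.
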